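(* Let $G$ be a subgroup of the symmetric group $\mathcal{S}_{N}$ and $\chi$ an irreducible character of $G$, and define for $N\times N$ real matrices $A=(a_{ij})$ the immanant $d_{\chi}^{G}(A)=\sum_{\sigma\in G}\chi(\sigma)\prod_{i=1}^{N}a_{i\,\sigma(i)}$. If $A,B,C,X$ are $N\times N$ real symmetric positive semidefinite matrices, then \[ d_{\chi}^{G}(A+X)+d_{\chi}^{G}(B+X)+d_{\chi}^{G}(C+X)+d_{\chi}^{G}(A+B+C+X)\geq d_{\chi}^{G}(A+B+X)+d_{\chi}^{G}(B+C+X)+d_{\chi}^{G}(C+A+X)+d_{\chi}^{G}(X). \] *)

(* Defs.v *)
From HB Require Import structures.
From mathcomp Require Import all_boot all_order all_algebra all_fingroup.
From mathcomp Require Import mxrepresentation.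
From mathcomp Require Import reals.
From mathcomp Require Import complex.
Set Implicit Arguments. Unset Strict Implicit. Unset Printing Implicit Defensive.
Import Order.TTheory GRing.Theory Num.Theory.
Local Open Scope ring_scope.
Local Open Scope complex_scope.

Definition irr_character (R : realType) (N : nat) (G : {group 'S_N})
    (chi : 'S_N -> R[i]) : Prop :=
  exists (n : nat) (rG : mx_representation R[i] G n),
    mx_irreducible rG /\ forall g, g \in G -> chi g = \tr (rG g).

Definition immanant (R : realType) (N : nat) (G : {group 'S_N})
    (chi : 'S_N -> R[i]) (A : 'M[R]_N) : R[i] :=
  \sum_(s in G) chi s * \prod_(i < N) ((A i (s i))%:C).

Definition psd (R : realType) (N : nat) (A : 'M[R]_N) : Prop :=
  A^T = A /\ forall x : 'cV[R]_N, 0 <= (x^T *m A *m x) 0 0.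

(* Main.v *)
Require Import Defs.
From HB Require Import structures.
From mathcomp Require Import all_boot all_order all_algebra all_fingroup.
From mathcomp Require Import mxrepresentation reals complex.
From mathcomp Require Import mxred spectral sesquilinear ring.
Set Implicit Arguments. Unset Strict Implicit. Unset Printing Implicit Defensive.
Import Order.TTheory GRing.Theory Num.Theory.
Local Open Scope ring_scope.

Section Core.
Variable C : numClosedFieldType.

Definition PDf (gT : finGroupType) (G : {set gT}) (phi : gT -> C) :=
  forall c : gT -> C,
    0 <= \sum_(a in G) \sum_(b in G) c a * (c b)^* * phi (a * b^-1)%g.

Definition dotr n (u w : 'rV[C]_n) := \sum_k u 0 k * (w 0 k)^*.

Lemma dotr_gt0 n (v : 'rV[C]_n) : v != 0 -> 0 < dotr v v.
Proof.
move=> vn0; have [k vk] : exists k, v 0 k != 0.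
  apply/existsP; apply: contraR vn0 => /existsPn H.
  apply/eqP/rowP => k; rewrite mxE; have := H k; rewrite negbK; by move/eqP.
rewrite /dotr (bigD1 k) //=; apply: ltr_wpDr.
  by apply: sumr_ge0 => i _; exact: mul_conjC_ge0.
by rewrite mul_conjC_gt0.
Qed.

Lemma dotr_ge0 n (v : 'rV[C]_n) : 0 <= dotr v v.
Proof. by apply: sumr_ge0 => i _; exact: mul_conjC_ge0. Qed.

Lemma dotrZ n a (u w : 'rV[C]_n) : dotr (a *: u) w = a * dotr u w.
Proof. by rewrite /dotr mulr_sumr; apply: eq_bigr => k _; rewrite mxE mulrA. Qed.

Lemma dotr_sum n (I : finType) (P : pred I) (F : I -> 'rV[C]_n) w :
  dotr (\sum_(i | P i) F i) w = \sum_(i | P i) dotr (F i) w.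
Proof.
rewrite /dotr exchange_big /=; apply: eq_bigr => k _.
by rewrite summxE mulr_suml.
Qed.

Variables (gT : finGroupType) (G : {group gT}) (n : nat).
Variable rG : mx_representation C G n.
Variable phi : gT -> C.
Hypothesis PD : PDf G phi.

Let T := \sum_(g in G) phi g *: rG g.

Lemma eig_ge0 (l : C) (v : 'rV[C]_n) : v != 0 -> v *m T = l *: v -> 0 <= l.
Proof.
move=> vn0 hv.
pose Q := \sum_(h in G) dotr (v *m T *m rG h) (v *m rG h).
have HQ1 : Q = l * \sum_(h in G) dotr (v *m rG h) (v *m rG h).
  rewrite /Q mulr_sumr; apply: eq_bigr => h _.
  by rewrite hv -scalemxAl dotrZ.
have Hq : 0 < \sum_(h in G) dotr (v *m rG h) (v *m rG h).
  rewrite (bigD1 1%g) ?group1 //= repr_mx1 mulmx1.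
  apply: ltr_wpDr; last exact: dotr_gt0.
  by apply: sumr_ge0 => h _; exact: dotr_ge0.
have HQ2 : 0 <= Q.
  have -> : Q = \sum_k \sum_(a in G) \sum_(b in G)
       (v *m rG a) 0 k * ((v *m rG b) 0 k)^* * phi (a * b^-1)%g.
    have E : forall h, h \in G -> dotr (v *m T *m rG h) (v *m rG h) =
      \sum_k \sum_(a in G) (v *m rG a) 0 k * ((v *m rG h) 0 k)^* * phi (a * h^-1)%g.
      move=> h hG.
      rewrite /T mulmx_sumr mulmx_suml dotr_sum /dotr exchange_big /=.
      apply: eq_bigr => k _.
      rewrite (reindex_inj (mulIg h^-1)%g) /=.
      apply: eq_big => [a|a aG]; first by rewrite groupMr ?groupV.
      rewrite -scalemxAr -scalemxAl -mulmxA -repr_mxM // mulgKV mxE.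
      by rewrite -mulrA mulrC.
    rewrite /Q (eq_bigr _ E) exchange_big /=; apply: eq_bigr => k _.
    by rewrite exchange_big.
  by apply: sumr_ge0 => k _; exact: PD.
by move: HQ2; rewrite HQ1 pmulr_lge0.
Qed.

Lemma tr_ge0 : 0 <= \sum_(g in G) \tr (rG g) * phi g.
Proof.
have -> : \sum_(g in G) \tr (rG g) * phi g = \tr T.
  rewrite /T raddf_sum; apply: eq_bigr => g _; rewrite /= mxtraceZ mulrC.
  done.
have [n0|npos] := posnP n.
  by rewrite /mxtrace big1 // => -[i hi]; exfalso; move: hi; rewrite n0.
have [P Pu PT] := Schur T npos.
have Pun : P \in unitmx by exact: unitarymx_unit.
set U := conjmx P T in PT.
have -> : \tr T = \tr U.
  by rewrite /U conjumx // mxtrace_mulC mulmxA mulVmx // mul1mx.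
rewrite /mxtrace; apply: sumr_ge0 => i _.
have ev : U i i \in eigenvalue U.
  rewrite -[_ \in _]/(eigenvalue U (U i i)) eigenvalue_root_char char_poly_trig // /root horner_prod.
  apply/prodf_eq0; exists i => //; by rewrite hornerXsubC subrr.
have rf : row_free P by rewrite row_free_unit.
have := eigenvalue_conjmx (stablemx_unit _ Pun) rf ev.
rewrite -[_ \in _]/(eigenvalue T (U i i)) => /eigenvalueP [w hw wn0].
exact: eig_ge0 wn0 hw.
Qed.

End Core.

Section Gram.
Variable R : realType.
Local Notation toC := (real_complex R).

Lemma conj_toC (r : R) : (toC r)^* = toC r.
Proof. by apply: conj_Creal; rewrite complex_real. Qed.

Lemma qf_col N (M : 'M[R]_N) (v : 'I_N -> R) :
  \sum_p \sum_q M p q * (v p * v q) = ((\col_p v p)^T *m M *m \col_p v p) 0 0.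
Proof.
rewrite mxE exchange_big /=; apply: eq_bigr => q _.
rewrite !mxE mulr_suml; apply: eq_bigr => p _.
by rewrite !mxE; ring.
Qed.

Lemma quad_ge0 N (M : 'M[R]_N) : psd M -> forall z : 'I_N -> R[i],
  0 <= \sum_p \sum_q z p * toC (M p q) * (z q)^*.
Proof.
case=> Msym Mpsd z.
have Ms p q : M q p = M p q by rewrite -[in LHS]Msym mxE.
pose x p := complex.Re (z p). pose y p := complex.Im (z p).
have i2 : 'i * 'i = -1 :> R[i] by rewrite -expr2 sqrCi.
have zE p : z p = toC (x p) + 'i * toC (y p) by exact: complexE.
have zcE p : (z p)^* = toC (x p) - 'i * toC (y p).
  by rewrite zE rmorphD rmorphM /= !conj_toC conjCi mulNr.
have term p q : z p * toC (M p q) * (z q)^* =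
   toC (M p q * (x p * x q + y p * y q)) + 'i * toC (M p q * (y p * x q - x p * y q)).
  rewrite zcE [z p]zE !rmorphM !rmorphD ?rmorphB !rmorphM /=.
  ring: i2.
rewrite (eq_bigr _ (fun p _ => eq_bigr _ (fun q _ => term p q))).
rewrite (eq_bigr _ (fun p _ => big_split _ _ _ _ _)) big_split /=.
under [X in _ + X]eq_bigr => p _ do rewrite -mulr_sumr.
rewrite -mulr_sumr.
under eq_bigr => p _ do rewrite -rmorph_sum.
under [X in _ + 'i * X]eq_bigr => p _ do rewrite -rmorph_sum.
rewrite -!rmorph_sum /=.
have -> : \sum_p \sum_q M p q * (y p * x q - x p * y q) = 0.
  have -> : \sum_p \sum_q M p q * (y p * x q - x p * y q) =
     \sum_p \sum_q M p q * (y p * x q) - \sum_p \sum_q M p q * (x p * y q).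
    by rewrite -sumrB; apply: eq_bigr => p _; rewrite -sumrB; apply: eq_bigr => q _; ring.
  rewrite [X in _ - X]exchange_big /=; apply/eqP; rewrite subr_eq0; apply/eqP.
  by apply: eq_bigr => p _; apply: eq_bigr => q _; rewrite Ms; ring.
rewrite rmorph0 mulr0 addr0 ler0c.
have -> : \sum_p \sum_q M p q * (x p * x q + y p * y q) =
   \sum_p \sum_q M p q * (x p * x q) + \sum_p \sum_q M p q * (y p * y q).
  rewrite -big_split; apply: eq_bigr => p _; rewrite -big_split; apply: eq_bigr => q _ /=. by rewrite mulrDr.
by rewrite !qf_col addr_ge0.
Qed.

Lemma gram N (M : 'M[R]_N) : psd M ->
  exists V : 'M[R[i]]_N, forall p q, toC (M p q) = \sum_r V r p * (V r q)^*.
Proof.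
move=> Mp; have [Msym _] := Mp.
have Ms p q : M q p = M p q by rewrite -[in LHS]Msym mxE.
pose Mc := map_mx toC M.
have McH : map_mx Num.conj Mc^T = Mc.
  by apply/matrixP => p q; rewrite !mxE conj_toC Ms.
have Mn : Mc \is normalmx by apply/normalmxP; rewrite McH.
have E := orthomx_spectralP Mn.
set P := spectralmx Mc in E; set d := spectral_diag Mc in E.
have Pu : P \is unitarymx by exact: spectral_unitarymx.
rewrite invmx_unitary // in E.
have PP : P *m map_mx Num.conj P^T = 1%:M by apply/unitarymxP.
have Ent p q : Mc p q = \sum_r (P r p)^* * d 0 r * P r q.
  by rewrite {1}E mul_mx_diag !mxE; apply: eq_bigr => r _; rewrite !mxE.
have dge0 r : 0 <= d 0 r.
  have -> : d 0 r = (P *m Mc *m map_mx Num.conj P^T) r r.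
    rewrite E !mulmxA PP mul1mx -!mulmxA PP mulmx1 mxE eqxx.
    by rewrite mulr1n.
  rewrite mxE.
  have -> : \sum_q (P *m Mc) r q * (map_mx Num.conj P^T) q r =
     \sum_p \sum_q P r p * toC (M p q) * (P r q)^*.
    rewrite exchange_big /=; apply: eq_bigr => q _.
    rewrite !mxE mulr_suml; apply: eq_bigr => p _; by rewrite !mxE.
  exact: quad_ge0.
exists (\matrix_(r, p) (sqrtC (d 0 r) * P r p)) => p q.
rewrite -Ms (_ : toC (M q p) = Mc q p); last by rewrite mxE.
rewrite Ent; apply: eq_bigr => r _.
rewrite !mxE rmorphM /= (geC0_conj (x := sqrtC _)); last by rewrite sqrtC_ge0.
have := sqrtCK (d 0 r); rewrite expr2 => h.
by rewrite -[in LHS]h; ring.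
Qed.

End Gram.

Section PDD.
Variable C : numClosedFieldType.

Variables (N : nat) (G : {group 'S_N}).
Variables (Ms V : 'I_4 -> 'M[C]_N).
Hypothesis HV : forall k p q, Ms k p q = \sum_r V k r p * (V k r q)^*.
Variable c : {ffun 'I_N -> 'I_4} -> C.
Hypothesis c_ge0 : forall f, 0 <= c f.
Hypothesis c_inv : forall (f : {ffun 'I_N -> 'I_4}) (s : 'S_N), c [ffun i => f (s i)] = c f.

Definition Dphi (s : 'S_N) := \sum_f c f * \prod_i Ms (f i) i (s i).

Let U (a : 'S_N) (g : {ffun 'I_N -> 'I_4}) (r : {ffun 'I_N -> 'I_N}) :=
  \prod_l V (g l) (r l) (a^-1 l)%g.

Lemma Dphi_ab (a b : 'S_N) :
  Dphi (a * b^-1)%g = \sum_g c g * \sum_r U a g r * (U b g r)^*.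
Proof.
rewrite /Dphi.
have inj : injective (fun g : {ffun 'I_N -> 'I_4} => [ffun i => g (a i)]).
  move=> g1 g2 /ffunP E; apply/ffunP => l.
  by have := E (a^-1 l)%g; rewrite !ffunE permKV.
rewrite (reindex_inj inj) /=; apply: eq_bigr => g _.
rewrite c_inv; congr (_ * _).
rewrite (reindex_inj (@perm_inj _ (a^-1)%g)) /=.
have -> : \prod_l Ms ([ffun i => g (a i)] ((a^-1)%g l)) ((a^-1)%g l)
              ((a * b^-1)%g ((a^-1)%g l)) =
          \prod_l \sum_r V (g l) r ((a^-1)%g l) * (V (g l) r ((b^-1)%g l))^*.
  by apply: eq_bigr => l _; rewrite ffunE permM !permKV HV.
rewrite bigA_distr_bigA /=; apply: eq_bigr => r _.
by rewrite big_split /= /U rmorph_prod.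
Qed.

Lemma expand2 (I : finType) (P : pred I) (k : C) (A B : I -> C) :
  k * (\sum_(a | P a) A a) * (\sum_(b | P b) B b)^* =
  \sum_(a | P a) \sum_(b | P b) k * A a * (B b)^*.
Proof.
rewrite rmorph_sum /= [k * _]mulr_sumr big_distrlr /=; apply: eq_bigr => a _.
by apply: eq_bigr => b _.
Qed.

Lemma PD_Dphi : PDf G Dphi.
Proof.
move=> x.
have E : forall a b, x a * (x b)^* * Dphi (a * b^-1)%g =
   \sum_g \sum_r c g * (x a * U a g r) * (x b * U b g r)^*.
  move=> a b; rewrite Dphi_ab mulr_sumr; apply: eq_bigr => g _.
  rewrite mulr_sumr mulr_sumr; apply: eq_bigr => r _.
  by rewrite rmorphM /=; ring.
under eq_bigr => a _ do under eq_bigr => b _ do rewrite E.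
have -> : \sum_(a in G) \sum_(b in G) \sum_g \sum_r
    c g * (x a * U a g r) * (x b * U b g r)^* =
  \sum_g \sum_r c g * (\sum_(a in G) x a * U a g r) *
        (\sum_(b in G) x b * U b g r)^*.
  under eq_bigr => a _ do rewrite exchange_big /=.
  rewrite exchange_big /=; apply: eq_bigr => g _.
  under eq_bigr => a _ do rewrite exchange_big /=.
  rewrite exchange_big /=; apply: eq_bigr => r _.
  by rewrite expand2.
apply: sumr_ge0 => g _; apply: sumr_ge0 => r _.
by rewrite -mulrA mulr_ge0 // mul_conjC_ge0.
Qed.

End PDD.

Section Main.
Variables (R : realType) (N : nat) (A B Cm X : 'M[R]_N).
Local Notation toC := (real_complex R).

Definition allowed (ta tb tc : bool) (k : 'I_4) : bool :=
  [|| val k == 0%N, ta && (val k == 1%N), tb && (val k == 2%N) | tc && (val k == 3%N)].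

Lemma allowedE ta tb tc k : allowed ta tb tc k =
  [&& ta || (val k != 1%N), tb || (val k != 2%N) & tc || (val k != 3%N)].
Proof. rewrite /allowed; case: k => [[|[|[|[|m]]]] hk] /=. all: by rewrite ?orbT ?orbF ?andbT ?andbF /=; case: ta; case: tb; case: tc. Qed.

Definition Ex (j : nat) (f : {ffun 'I_N -> 'I_4}) := [exists i, val (f i) == j].

Lemma prod_or (t : bool) (j : nat) (f : {ffun 'I_N -> 'I_4}) :
  \prod_i ((t || (val (f i) != j))%:R : R[i]) = (t || ~~ Ex j f)%:R.
Proof.
case: t => /=; first by rewrite big1.
rewrite /Ex; case: existsP => [[i Pi]|nP] /=.
  by rewrite (bigD1 i) //= Pi mul0r.
rewrite big1 // => i _.
have : val (f i) != j by apply/negP => Pi; apply: nP; exists i.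
by move=> ->.
Qed.

Lemma natr_and3 (a b c : bool) : (([&& a, b & c])%:R : R[i]) = a%:R * b%:R * c%:R.
Proof. by case: a b c => [] [] [] /=; rewrite ?mul1r ?mulr1 ?mul0r ?mulr0. Qed.

Definition Mr (k : 'I_4) : 'M[R]_N :=
  if val k == 0%N then X else if val k == 1%N then A
  else if val k == 2%N then B else Cm.
Definition Msc (k : 'I_4) := map_mx toC (Mr k).
Definition Pm (Y : 'M[R]_N) (s : 'S_N) := \prod_i toC (Y i (s i)).
Definition wt ta tb tc (f : {ffun 'I_N -> 'I_4}) : R[i] :=
  (ta || ~~ Ex 1 f)%:R * (tb || ~~ Ex 2 f)%:R * (tc || ~~ Ex 3 f)%:R.
Definition tf (f : {ffun 'I_N -> 'I_4}) (s : 'S_N) := \prod_i Msc (f i) i (s i).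

Lemma expand (Y : 'M[R]_N) ta tb tc :
  (forall i j, toC (Y i j) = \sum_k (allowed ta tb tc k)%:R * Msc k i j) ->
  forall s, Pm Y s = \sum_f wt ta tb tc f * tf f s.
Proof.
move=> HY s; rewrite /Pm.
under eq_bigr => i _ do rewrite HY.
rewrite bigA_distr_bigA /=; apply: eq_bigr => f _.
rewrite big_split /=; congr (_ * _).
rewrite /wt -!prod_or -!big_split /=; apply: eq_bigr => i _.
by rewrite allowedE natr_and3.
Qed.

Lemma entry_expand (ta tb tc : bool) i j :
  \sum_k (allowed ta tb tc k)%:R * Msc k i j =
  toC (X i j) + ta%:R * toC (A i j) + tb%:R * toC (B i j) + tc%:R * toC (Cm i j).
Proof.
rewrite !big_ord_recr big_ord0 /= /Msc /Mr /allowed !mxE /=.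
by case: ta tb tc => [] [] [] /=; ring.
Qed.

Definition cc (f : {ffun 'I_N -> 'I_4}) : R[i] := ([&& Ex 1 f, Ex 2 f & Ex 3 f])%:R.

Lemma key s :
  Pm (A + X) s + Pm (B + X) s + Pm (Cm + X) s + Pm (A + B + Cm + X) s
  - (Pm (A + B + X) s + Pm (B + Cm + X) s + Pm (Cm + A + X) s + Pm X s)
  = Dphi Msc cc s.
Proof.
have h1 : forall i j, toC ((A + X) i j) = \sum_k (allowed true false false k)%:R * Msc k i j.
  by move=> i j; rewrite entry_expand !mxE !rmorphD /=; ring.
have h2 : forall i j, toC ((B + X) i j) = \sum_k (allowed false true false k)%:R * Msc k i j.
  by move=> i j; rewrite entry_expand !mxE !rmorphD /=; ring.
have h3 : forall i j, toC ((Cm + X) i j) = \sum_k (allowed false false true k)%:R * Msc k i j.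
  by move=> i j; rewrite entry_expand !mxE !rmorphD /=; ring.
have h4 : forall i j, toC ((A + B + Cm + X) i j) = \sum_k (allowed true true true k)%:R * Msc k i j.
  by move=> i j; rewrite entry_expand !mxE !rmorphD /=; ring.
have h5 : forall i j, toC ((A + B + X) i j) = \sum_k (allowed true true false k)%:R * Msc k i j.
  by move=> i j; rewrite entry_expand !mxE !rmorphD /=; ring.
have h6 : forall i j, toC ((B + Cm + X) i j) = \sum_k (allowed false true true k)%:R * Msc k i j.
  by move=> i j; rewrite entry_expand !mxE !rmorphD /=; ring.
have h7 : forall i j, toC ((Cm + A + X) i j) = \sum_k (allowed true false true k)%:R * Msc k i j.
  by move=> i j; rewrite entry_expand !mxE !rmorphD /=; ring.
have h8 : forall i j, toC (X i j) = \sum_k (allowed false false false k)%:R * Msc k i j.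
  by move=> i j; rewrite entry_expand /=; ring.
rewrite (expand h1) (expand h2) (expand h3) (expand h4) (expand h5) (expand h6)
  (expand h7) (expand h8) /Dphi.
rewrite -!big_split -sumrB /=; apply: eq_bigr => f _.
rewrite /wt /cc /tf /=.
by case: (Ex 1 f); case: (Ex 2 f); case: (Ex 3 f) => /=; ring.
Qed.

End Main.
Lemma Ex_perm N j (f : {ffun 'I_N -> 'I_4}) (s : 'S_N) :
  Ex j [ffun i => f (s i)] = Ex j f.
Proof.
apply/existsP/existsP => [[i hi]|[i hi]].
  by exists (s i); rewrite ffunE in hi.
by exists ((s^-1)%g i); rewrite ffunE permKV.
Qed.

Unset Implicit Arguments.

Theorem theorem5p7 (R : realType) (N : nat) (G : {group 'S_N})
    (chi : 'S_N -> R[i]) (A B C X : 'M[R]_N) :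
  irr_character G chi ->
  psd A -> psd B -> psd C -> psd X ->
  immanant G chi (A + B + X) + immanant G chi (B + C + X)
    + immanant G chi (C + A + X) + immanant G chi X
  <= immanant G chi (A + X) + immanant G chi (B + X)
    + immanant G chi (C + X) + immanant G chi (A + B + C + X).
Proof.
move=> [n [rG [_ Hchi]]] pA pB pC pX.
have [VA hA] := gram pA; have [VB hB] := gram pB.
have [VC hC] := gram pC; have [VX hX] := gram pX.
pose Vk (k : 'I_4) := if val k == 0%N then VX else if val k == 1%N then VA
  else if val k == 2%N then VB else VC.
have HV : forall k p q, Msc A B C X k p q = \sum_r Vk k r p * (Vk k r q)^*.
  move=> k p q; rewrite /Msc /Mr /Vk mxE.
  by case: ifP => _; [exact: hX | case: ifP => _; [exact: hA | case: ifP => _; [exact: hB | exact: hC]]].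
have cge0 : forall f, 0 <= @cc R N f by move=> f; rewrite /cc ler0n.
have cinv : forall (f : {ffun 'I_N -> 'I_4}) (s : 'S_N), @cc R N [ffun i => f (s i)] = @cc R N f.
  by move=> f s; rewrite /cc !Ex_perm.
rewrite -subr_ge0.
have -> : immanant G chi (A + X) + immanant G chi (B + X)
    + immanant G chi (C + X) + immanant G chi (A + B + C + X) -
   (immanant G chi (A + B + X) + immanant G chi (B + C + X)
    + immanant G chi (C + A + X) + immanant G chi X) =
   \sum_(s in G) \tr (rG s) * Dphi (Msc A B C X) (@cc R N) s.
  rewrite /immanant -!big_split -sumrB /=; apply: eq_bigr => s sG.
  rewrite Hchi // -key /Pm; ring.
apply: tr_ge0; exact: (PD_Dphi G HV cge0 cinv).
Qed.
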